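(* Let $\mathbb{F}$ be a field, $m,b\in\mathbb{F}$ with $m\ne0$, $m\neq1$, let $\mathfrak{A}$ be the unital associative $\mathbb{F}$-algebra generated by $A,B$ subject to $AB=mBA+bI$, and let $C=AB-BA$. For every positive integer $n$, $$(m-1)^nA^nB^n=\prod_{i=1}^n(m^iC-bI),\qquad (m-1)^nB^nA^n=\prod_{i=0}^{n-1}(m^{-i}C-bI).$$
   Context: $I$ is the unity of $\mathfrak{A}$; the factors in each product commute since they are polynomials in $C$. *)

(* Defs.v *)
From HB Require Import structures.
From mathcomp Require Import all_boot all_order all_algebra.
Set Implicit Arguments. Unset Strict Implicit. Unset Printing Implicit Defensive.

(* Main.v *)
Require Import Defs.
From HB Require Import structures.
From mathcomp Require Import all_boot all_order all_algebra.
Import GRing.Theory.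
Local Open Scope ring_scope.
Section S.
Variables (F : fieldType) (R : algType F) (m b : F) (A B : R).
Hypothesis hm : m != 0.
Hypothesis hAB : A * B = m *: (B * A) + b%:A.
Let C := A * B - B * A.
Lemma hC : C = (m - 1) *: (B * A) + b%:A.
Proof. by rewrite /C hAB scalerBl scale1r addrAC. Qed.
Lemma AC : A * C = m *: (C * A).
Proof.
rewrite hC !(mulrDr, mulrDl) -?(scalerAr, scalerAl) ?(mulr_algr, mulr_algl) mulrA hAB.
rewrite !(mulrDr, mulrDl) -?(scalerAr, scalerAl) ?(mulr_algr, mulr_algl) ?scalerDr ?scalerA.
rewrite ?mul1r ?mulr1 -addrA -scalerDl [(m - 1) * m]mulrC; congr (_ + _); congr (_ *: _).
by rewrite mulrBl mul1r subrK mulrC.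
Qed.
Lemma CB : C * B = m *: (B * C).
Proof.
rewrite hC !(mulrDr, mulrDl) -?(scalerAr, scalerAl) ?(mulr_algr, mulr_algl) -mulrA hAB.
rewrite !(mulrDr, mulrDl) -?(scalerAr, scalerAl) ?(mulr_algr, mulr_algl) ?scalerDr ?scalerA.
rewrite ?mul1r ?mulr1 -addrA -scalerDl [(m - 1) * m]mulrC; congr (_ + _); congr (_ *: _).
by rewrite mulrBl mul1r subrK mulrC.
Qed.
Lemma AP (f : nat -> F) (r : seq nat) :
  A * \prod_(i <- r) (f i *: C - b%:A) = \prod_(i <- r) ((f i * m) *: C - b%:A) * A.
Proof.
have H c : A * (c *: C - b%:A) = ((c * m) *: C - b%:A) * A.
  by rewrite mulrBr mulrBl -scalerAr AC mulr_algr mulr_algl scalerA scalerAl.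
elim: r => [|i r IH]; first by rewrite !big_nil mul1r mulr1.
by rewrite !big_cons mulrA H -!mulrA IH.
Qed.
Lemma BC : B * C = m^-1 *: (C * B).
Proof. by rewrite CB scalerA mulVf // scale1r. Qed.
Lemma BP (f : nat -> F) (r : seq nat) :
  B * \prod_(i <- r) (f i *: C - b%:A) = \prod_(i <- r) ((f i / m) *: C - b%:A) * B.
Proof.
have H c : B * (c *: C - b%:A) = ((c / m) *: C - b%:A) * B.
  by rewrite mulrBr mulrBl -scalerAr BC mulr_algr mulr_algl scalerA scalerAl.
elim: r => [|i r IH]; first by rewrite !big_nil mul1r mulr1.
by rewrite !big_cons mulrA H -!mulrA IH.
Qed.
Lemma commP (c : F) (f : nat -> F) (r : seq nat) :
  (c *: C - b%:A) * \prod_(i <- r) (f i *: C - b%:A) = \prod_(i <- r) (f i *: C - b%:A) * (c *: C - b%:A).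
Proof.
have H c' : (c *: C - b%:A) * (c' *: C - b%:A) = (c' *: C - b%:A) * (c *: C - b%:A).
  rewrite !(mulrBl, mulrBr) -?(scalerAr, scalerAl) ?(mulr_algr, mulr_algl) ?scalerA ?mul1r ?mulr1 (mulrC c' c) (mulrC b c) (mulrC b c').
  by rewrite !opprB !addrA addrAC [in RHS]addrAC (addrAC _ (- _) (- _)).
elim: r => [|i r IH]; first by rewrite !big_nil mul1r mulr1.
by rewrite !big_cons mulrA H -!mulrA IH.
Qed.
Lemma hAB2 : (m - 1) *: (A * B) = m *: C - b%:A.
Proof. by rewrite scalerBl scale1r /C scalerBr -addrA; congr (_ + _); rewrite hAB opprD. Qed.
Lemma hBA2 : (m - 1) *: (B * A) = C - b%:A.
Proof. by rewrite hC addrK. Qed.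
Lemma first n : (m - 1) ^+ n *: (A ^+ n * B ^+ n) = \prod_(1 <= i < n.+1) (m ^+ i *: C - b%:A).
Proof.
elim: n => [|n IH]; first by rewrite big_geq // !expr0 scale1r mulr1.
rewrite big_nat_recl // expr1.
have -> : (m - 1) ^+ n.+1 *: (A ^+ n.+1 * B ^+ n.+1) = A * ((m - 1) ^+ n *: (A ^+ n * B ^+ n)) * ((m - 1) *: B).
  by rewrite -?(scalerAr, scalerAl) ?scalerA [A ^+ n.+1]exprS [B ^+ n.+1]exprSr [(m - 1) ^+ n.+1]exprS !mulrA.
rewrite IH AP -mulrA -scalerAr hAB2 -(commP m (fun i => m ^+ i * m)); congr (_ * _).
by apply: eq_bigr => i _; rewrite exprSr.
Qed.
Lemma second n : (m - 1) ^+ n *: (B ^+ n * A ^+ n) = \prod_(0 <= i < n) (m ^- i *: C - b%:A).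
Proof.
elim: n => [|n IH]; first by rewrite big_geq // !expr0 scale1r mulr1.
rewrite big_nat_recl // expr0 invr1 scale1r.
have -> : (m - 1) ^+ n.+1 *: (B ^+ n.+1 * A ^+ n.+1) = B * ((m - 1) ^+ n *: (B ^+ n * A ^+ n)) * ((m - 1) *: A).
  by rewrite -?(scalerAr, scalerAl) ?scalerA [B ^+ n.+1]exprS [A ^+ n.+1]exprSr [(m - 1) ^+ n.+1]exprS !mulrA.
have H1 := commP 1 (fun i => m ^- i / m) (index_iota 0 n); rewrite scale1r in H1.
rewrite IH BP -mulrA -scalerAr hBA2 -H1; congr (_ * _).
by apply: eq_bigr => i _; rewrite exprSr invfM.
Qed.
End S.
Theorem mainTheorem7 (F : fieldType) (R : algType F) (m b : F) (A B : R) :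
  m != 0 -> m != 1 ->
  A * B = m *: (B * A) + b%:A ->
  forall n : nat, (0 < n)%N ->
    ((m - 1) ^+ n) *: (A ^+ n * B ^+ n)
      = \prod_(1 <= i < n.+1) (m ^+ i *: (A * B - B * A) - b%:A)
    /\
    ((m - 1) ^+ n) *: (B ^+ n * A ^+ n)
      = \prod_(0 <= i < n) (m ^- i *: (A * B - B * A) - b%:A).
Proof.
move=> hm _ hAB n _; split; [exact: first | exact: second].
Qed.
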